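(* Let $b\ge 2$ and $n\ge 0$ be integers. Then $\max \mathrm{Ap}(T_b(n),s_0) = w(s_0-(b-1))$, where $w(r)$ denotes the least element of $T_b(n)$ congruent to $r$ modulo $s_0$.
   Context: For integers $b\ge 2$, $n\ge 0$, $i\ge0$ put $s_i=(b+1)b^{n+i}-1$ and $T_b(n)=\langle\{s_i:i\in\mathbb{N}\}\rangle$ (a numerical semigroup). For a numerical semigroup $S$ and $x\in S\setminus\{0\}$, $\mathrm{Ap}(S,x)=\{s\in S: s-x\notin S\}$. *)

(* Defs.v *)
From mathcomp Require Import all_boot.
Set Implicit Arguments. Unset Strict Implicit. Unset Printing Implicit Defensive.

Definition sgen (b n i : nat) : nat := (b.+1) * b ^ (n + i) - 1.

(* T_b(n): the submonoid of (nat,+) generated by {s_i : i in N}, i.e. the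
   finite sums of generators (with repetition; empty sum = 0). *)
Definition inT (b n x : nat) : Prop :=
  exists l : seq nat, x = sumn (map (sgen b n) l).

(* Apery set Ap(S, a) = { s in S : s - a notin S } (s - a taken in Z). *)
Definition inAp (S : nat -> Prop) (a s : nat) : Prop :=
  S s /\ ~ (a <= s /\ S (s - a)).

Definition is_w (S : nat -> Prop) (d r m : nat) : Prop :=
  S m /\ m = r %[mod d] /\ (forall y, S y -> y = r %[mod d] -> m <= y).

Definition is_max (P : nat -> Prop) (m : nat) : Prop :=
  P m /\ (forall y, P y -> y <= m).

(* Main.v *)
Require Import Defs.
From mathcomp Require Import all_boot zify.
Set Implicit Arguments. Unset Strict Implicit. Unset Printing Implicit Defensive.

Definition Sx (b : nat) (l : seq nat) := sumn (map (expn b) l).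

Lemma Sx_cons b j l : Sx b (j :: l) = b ^ j + Sx b l.
Proof. by []. Qed.

Lemma Sx_cat b l1 l2 : Sx b (l1 ++ l2) = Sx b l1 + Sx b l2.
Proof. by rewrite /Sx map_cat sumn_cat. Qed.

Lemma Sx_nseq b k j : Sx b (nseq k j) = k * b ^ j.
Proof. elim: k => [|k IH] //=. rewrite Sx_cons IH mulSn. lia. Qed.

Lemma sgen_sum b n l : 0 < b ->
  sumn (map (sgen b n) l) + size l = b.+1 * b ^ n * Sx b l.
Proof.
move=> b0; elim: l => [|j l IH] /=; first by rewrite muln0.
rewrite {1}/sgen expnD mulnA Sx_cons mulnDr.
have : 0 < b.+1 * b ^ n * b ^ j by rewrite !muln_gt0 !expn_gt0 b0.
move: IH; set X := b.+1 * b ^ n * b ^ j. move=> IH hX. lia.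
Qed.

Lemma size_le_S b l : 0 < b -> size l <= Sx b l.
Proof.
move=> b0; elim: l => [|j l IH] //=. rewrite Sx_cons.
have : 0 < b ^ j by rewrite expn_gt0 b0. lia.
Qed.

Lemma dvd_S_size b l : 0 < b -> (b - 1) %| Sx b l - size l.
Proof.
move=> b0; elim: l => [|j l IH] //=. rewrite Sx_cons.
have h1 := size_le_S l b0.
have h2 : 0 < b ^ j by rewrite expn_gt0 b0.
have -> : b ^ j + Sx b l - (size l).+1 = (b ^ j).-1 + (Sx b l - size l) by lia.
apply: dvdn_add => //. rewrite subn1. exact: dvdn_pred_predX.
Qed.

Lemma decomp b l : exists l1 c0, Sx b l = Sx b l1 + c0 /\ size l = size l1 + c0 /\
  all (fun j => 0 < j) l1.
Proof.
elim: l => [|j l [l1 [c0 [h1 [h2 h3]]]]]; first by exists [::], 0.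
case: j => [|j].
- exists l1, c0.+1; rewrite Sx_cons /= h1 h2 expn0; split; [lia|split; [lia|done]].
- exists (j.+1 :: l1), c0; rewrite !Sx_cons /= h1 h2 h3; split; [lia|split; [lia|done]].
Qed.

Lemma dvd_b_pos b l : all (fun j => 0 < j) l -> b %| Sx b l.
Proof.
elim: l => [|j l IH] //= /andP [hj hl]. rewrite Sx_cons dvdn_add //; last exact: IH.
by case: j hj => // j _; rewrite expnS dvdn_mulr.
Qed.

Lemma S_bound b k l : 1 < b -> Sx b l < b ^ k.+1 -> Sx b l <= size l * b ^ k.
Proof.
move=> b1; elim: l => [|j l IH] //=. rewrite Sx_cons mulSn => h.
have hj : b ^ j < b ^ k.+1 by lia.
rewrite ltn_exp2l // ltnS -(leq_exp2l _ _ b1) in hj.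
have := IH ltac:(lia). lia.
Qed.

Lemma split1 b l : 0 < b -> size l < Sx b l ->
  exists l', Sx b l' = Sx b l /\ size l' = size l + (b - 1).
Proof.
move=> b0; elim: l => [|j l IH] //=. rewrite Sx_cons.
case: j => [|j] h.
- rewrite expn0 in h. have [l' [h1 h2]] := IH ltac:(lia).
  exists (0 :: l'); rewrite Sx_cons /= h1 h2 expn0. split; lia.
- exists (nseq b j ++ l); rewrite Sx_cat Sx_nseq size_cat size_nseq expnS.
  split; lia.
Qed.

Lemma splitd b d l : 1 < b -> size l + (b - 1) * d <= Sx b l ->
  exists l', Sx b l' = Sx b l /\ size l' = size l + (b - 1) * d.
Proof.
move=> b1; elim: d => [|d IH] h; first by exists l; rewrite muln0 addn0.
rewrite mulnS in h. have [l' [h1 h2]] := IH ltac:(lia).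
have [l'' [h3 h4]] := split1 (b := b) (l := l') ltac:(lia) ltac:(lia).
exists l''; split; first by rewrite h3.
rewrite h4 h2 mulnS. lia.
Qed.

Lemma inT_list b n l : 0 < b -> inT b n (b.+1 * b ^ n * Sx b l - size l).
Proof. move=> b0; exists l. have := sgen_sum n l b0. lia. Qed.

Lemma expn_mod b n : 0 < b -> exists q, b ^ n = (b - 1) * q + 1.
Proof.
move=> b0; elim: n => [|n [q hq]]; first by exists 0; rewrite muln0.
exists (b * q + 1); rewrite expnS hq. nia.
Qed.

Lemma L1 a b1 K0 : a.+2*(K0 + b1*a) = (a.+1*K0 + b1*a*a.+2) + K0.
Proof. nia. Qed.
Lemma L2 a b1 k0 : (a.+1*k0.+1 + b1*a*a.+2) + b1 = (k0 + b1*a.+1)*a.+1 + a.+1.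
Proof. nia. Qed.
Lemma L3 a K X : a.+2*(K + X) = a.+1*(K+X) + K + X.
Proof. nia. Qed.
Lemma L4 a q : a.+1*q.+1 = q*a.+1 + a.+1.
Proof. nia. Qed.
Lemma L6 b1 v k : (b1*v).+1 * k = b1*(v*k) + k.
Proof. nia. Qed.
Lemma L7 a b1 : a.+1*(2*b1) + b1*a*a.+2 <= a.+2*(b1*(2*a+1)).
Proof. nia. Qed.
Lemma L8 a Y : a.+2*Y = a.+1*Y + Y.
Proof. nia. Qed.
Lemma L9 a b1 K0 : a.+1*(K0 + b1*a) + b1*a = a.+1*K0 + b1*a*a.+2.
Proof. nia. Qed.
Lemma L10 a b1 K0 p : a.+2*(K0+b1*a+p) = (a.+2*(K0+b1*a)) + 2*p + p*a.
Proof. nia. Qed.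
Lemma L11 b1 u p v : b1*(u + p*v) = u*b1 + p*(b1*v).
Proof. nia. Qed.

Lemma inT_add0 b n z : inT b n z -> inT b n (sgen b n 0 + z).
Proof. by move=> [l ->]; exists (0 :: l). Qed.

Lemma core b1 a v n K0 l0 : 0 < b1 ->
  (b1.+2) * (b1.+1) ^ n = a.+2 -> a = b1 * v ->
  Sx b1.+1 l0 = K0 + b1 * a -> size l0 = K0 -> 0 < K0 <= 2 * b1 ->
  (forall l, Sx b1.+1 l - size l = b1 * a -> K0 <= size l) ->
  exists m : nat,
    is_w (inT b1.+1 n) (sgen b1.+1 n 0) (sgen b1.+1 n 0 - (b1.+1 - 1)) m /\
    is_max (inAp (inT b1.+1 n) (sgen b1.+1 n 0)) m.
Proof.
move=> b1p hA hav hS0 hsz0 /andP [K0p K0le] hlow.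
have bpos : 0 < b1.+1 by [].
have hs0 : sgen b1.+1 n 0 = a.+1 by rewrite /sgen addn0 hA; lia.
rewrite hs0 subn1 /=.
have hab : b1 <= a.
  have : 1 <= b1.+1 ^ n by rewrite expn_gt0.
  have : b1.+2 * 1 <= b1.+2 * b1.+1 ^ n by rewrite leq_mul2l expn_gt0 orbT.
  lia.
set M := a.+1 * K0 + b1 * a * a.+2.
have EM : a.+2 * (K0 + b1 * a) = M + K0 by rewrite /M L1.
have MT : inT b1.+1 n M.
  have := inT_list n l0 bpos. rewrite hA hS0 hsz0 EM. by rewrite addnK.
have Mge : a.+1 <= M.
  have : a.+1 * 1 <= a.+1 * K0 by rewrite leq_mul2l K0p orbT.
  rewrite /M; lia.
have Mmod : M %% a.+1 = (a.+1 - b1) %% a.+1.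
  have [k0 hk0] : exists k0, K0 = k0.+1 by exists K0.-1; lia.
  have E : M + b1 = (k0 + b1 * a.+1) * a.+1 + a.+1 by rewrite /M hk0 L2.
  have -> : M = (k0 + b1 * a.+1) * a.+1 + (a.+1 - b1) by lia.
  by rewrite modnMDl.
have Mmin : forall y, inT b1.+1 n y -> y %% a.+1 = (a.+1 - b1) %% a.+1 -> M <= y.
  move=> y [l hy] hmod.
  have hsum := sgen_sum n l bpos. rewrite hA -hy in hsum.
  have hKN := size_le_S l bpos.
  have /dvdnP [m hm] := dvd_S_size l bpos. rewrite subn1 /= in hm.
  move: hsum hKN hm.
  set N := Sx b1.+1 l. set K := size l. move=> hsum hKN hm.
  have hN : N = K + b1 * m by rewrite mulnC in hm; lia.
  have hr : a.+1 - b1 < a.+1 by lia.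
  rewrite (modn_small hr) in hmod.
  have hq := divn_eq y a.+1. rewrite hmod in hq. move: hq.
  set q := y %/ a.+1. move=> hq.
  set Z := a.+1 * (K + b1 * m).
  have EZ : a.+2 * (K + b1 * m) = Z + K + b1 * m by rewrite /Z L3.
  rewrite hN EZ in hsum.
  have Eq : a.+1 * q.+1 = q * a.+1 + a.+1 by rewrite L4.
  have Em : b1 * m.+1 = b1 * m + b1 by rewrite mulnS addnC.
  have hle : K + b1 * m <= q.+1.
    have : Z <= a.+1 * q.+1 by lia.
    by rewrite /Z leq_pmul2l.
  have hk : b1 * m.+1 = a.+1 * (q.+1 - (K + b1 * m)) by rewrite mulnBr; lia.
  move: hk. set k := q.+1 - (K + b1 * m). move=> hk.
  have Ek : a.+1 * k = b1 * (v * k) + k by rewrite hav L6.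
  have hk2 : k = b1 * (m.+1 - v * k) by rewrite mulnBr; lia.
  move: hk2. set w := m.+1 - v * k. move=> hk2.
  have hw : m.+1 = a.+1 * w.
    apply/eqP; rewrite -(eqn_pmul2l b1p). apply/eqP. rewrite hk hk2. by rewrite mulnCA.
  have wpos : 0 < w by case: w hw {hk2} => //; rewrite muln0.
  have hy2 : y = Z + b1 * m by lia.
  case: (ltngtP w 1) => hw1; first lia.
  -
    have hm2 : 2 * a + 1 <= m.
      have : a.+1 * 2 <= a.+1 * w by rewrite leq_mul2l hw1 orbT.
      lia.
    have t1 : M <= a.+2 * (b1 * (2 * a + 1)).
      have : a.+1 * K0 <= a.+1 * (2 * b1) by rewrite leq_mul2l K0le orbT.
      have := L7 a b1.
      rewrite /M; lia.
    have t2 : a.+2 * (b1 * (2 * a + 1)) <= a.+2 * (b1 * m).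
      by rewrite leq_mul2l leq_mul2l hm2 !orbT.
    have t3 : a.+2 * (b1 * m) = a.+1 * (b1 * m) + b1 * m by rewrite L8.
    have t4 : a.+1 * (b1 * m) <= Z by rewrite /Z leq_mul2l leq_addl orbT.
    lia.
  - rewrite hw1 muln1 in hw. have hma : m = a by lia.
    have hK0 : K0 <= K.
      apply: hlow. rewrite -/N -/K hN hma. lia.
    have : a.+1 * (K0 + b1 * a) <= Z by rewrite /Z hma leq_mul2l leq_add2r hK0 orbT.
    have : M = a.+1 * (K0 + b1 * a) + b1 * a by rewrite /M L9.
    rewrite hy2 hma. lia.
have cover : forall z, M < z + a.+1 -> inT b1.+1 n z.
  elim/ltn_ind => z IH hz.
  case: (leqP z M) => hzM.
  - have [e [hez he]] : exists e, z = M - e /\ e <= a by exists (M - z); lia.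
    have [p [hp hep]] : exists p, p < b1 /\ b1 %| e + p.
      have hd := divn_eq e b1. have hr := ltn_pmod e b1p.
      move: hd hr; case hr0 : (e %% b1) => [|r] hd hr.
        exists 0; split => //. rewrite addn0; apply/dvdnP; exists (e %/ b1); lia.
      exists (b1 - r.+1); split; first lia.
      apply/dvdnP; exists (e %/ b1).+1. rewrite mulSn. lia.
    have /dvdnP [u hu] := hep.
    have huv : u <= v.
      have : u * b1 < v.+1 * b1 by rewrite mulSn -hu; lia.
      by rewrite ltn_pmul2r // ltnS.
    set d := u + p * v.
    have hd : d <= b1 * v.
      have : p * v <= (b1 - 1) * v by rewrite leq_mul2r; lia.
      have : b1 * v = v + (b1 - 1) * v by rewrite -mulSn; congr (_ * _); lia.
      rewrite /d; lia.
    have hl := splitd (b := b1.+1) (d := d) (l := l0 ++ nseq p 0) ltac:(done).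
    rewrite Sx_cat Sx_nseq size_cat size_nseq expn0 muln1 hS0 hsz0 subn1 /= in hl.
    have [l' [hl1 hl2]] : exists l', Sx b1.+1 l' = K0 + b1 * a + p /\
         size l' = K0 + p + b1 * d.
      apply: hl => //.
      have : b1 * d <= b1 * (b1 * v) by rewrite leq_mul2l hd orbT.
      rewrite -hav; lia.
    have := inT_list n l' bpos. rewrite hA hl1 hl2.
    have E1 : a.+2 * (K0 + b1 * a + p) = M + K0 + 2 * p + p * a by rewrite L10 EM.
    have E2 : b1 * d = u * b1 + p * a by rewrite /d L11 -hav.
    rewrite E1 E2 -hu.
    have -> : M + K0 + 2 * p + p * a - (K0 + p + (e + p + p * a)) = z by lia.
    done.
  - have hz0 : a.+1 <= z by lia.
    have := IH (z - a.+1) ltac:(lia) ltac:(lia).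
    move/(inT_add0). by rewrite hs0 subnKC.
exists M; split; first by split; [done | split; [exact: Mmod | exact: Mmin]].
split.
- split => // [[hle hT]].
  have hmm : (M - a.+1) %% a.+1 = (a.+1 - b1) %% a.+1.
    by rewrite -Mmod -{2}(subnK hle) modnDr.
  have := Mmin _ hT hmm. lia.
- move=> y [hyT hyA]. case: (leqP y M) => // hyM. exfalso; apply: hyA.
  split; first lia. apply: cover. lia.
Qed.

Lemma low_pos b1 l : 0 < b1 -> exists l1, Sx b1.+1 l1 = Sx b1.+1 l - size l + size l1 /\
   size l1 <= size l /\ b1.+1 %| Sx b1.+1 l1.
Proof.
move=> b1p; have [l1 [c0 [h1 [h2 h3]]]] := decomp b1.+1 l.
exists l1. have := size_le_S l1 (ltn0Sn b1). split; first lia. split; first lia.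
exact: dvd_b_pos.
Qed.


Lemma low0 b1 l : 0 < b1 -> Sx b1.+1 l - size l = b1 * b1 -> b1 <= size l.
Proof.
move=> b1p h. have [l1 [e1 [e2 e3]]] := low_pos l b1p.
rewrite h in e1. rewrite e1 in e3.
have E : b1 * b1 + size l1 = b1.+1 * b1.-1 + (size l1).+1 by case: (b1) b1p => // c _; nia.
rewrite E dvdn_addr ?dvdn_mulr // in e3.
have := dvdn_leq (ltn0Sn _) e3. lia.
Qed.

Lemma ar1 b1 P : 0 < b1 -> 0 < P ->
  b1 * (b1.+2 * b1.+1 * P - 2) + (b1 - 1) <= (b1 - 1) * (b1.+1 * (b1.+1 * P)) -> False.
Proof. move=> h1 h2. case: b1 h1 => // c _. rewrite subn1 /=. nia. Qed.

Lemma ar2 b1 P : 0 < P -> b1 * (b1.+2 * b1.+1 * P - 2) + (b1 - 1) < b1.+1 * (b1.+1 * (b1.+1 * P)).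
Proof. move=> h2. nia. Qed.

Lemma ar3 b1 P K : 0 < P -> b1 * (b1.+2 * b1.+1 * P - 2) + K + 2 * b1.+1 =
   K + 2 + b1.+1 * (b1 * b1.+2 * P).
Proof. move=> hP. have : 2 <= b1.+2 * b1.+1 * P by nia. nia. Qed.

Lemma low1 b1 n l : 0 < b1 ->
  Sx b1.+1 l - size l = b1 * (b1.+2 * b1.+1 ^ n.+1 - 2) -> 2 * b1 <= size l.
Proof.
move=> b1p h. have [l1 [e1 [e2 e3]]] := low_pos l b1p.
rewrite h in e1.
set P := b1.+1 ^ n. have hP : 0 < P by rewrite expn_gt0.
have EP : b1.+1 ^ n.+1 = b1.+1 * P by rewrite expnS.
rewrite EP mulnA in e1.
have e4 : b1.+1 %| size l1 + 2.
  have : b1.+1 %| Sx b1.+1 l1 + 2 * b1.+1 by rewrite dvdn_add // dvdn_mull.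
  by rewrite e1 ar3 // dvdn_addl // dvdn_mulr.
have /dvdnP [c hc] := e4.
case: c hc => [|[|c]] hc; first lia.
- exfalso. have hK : size l1 = b1 - 1 by lia.
  have hb := S_bound (b := b1.+1) (k := n.+2) (l := l1) ltac:(done).
  rewrite !expnS -/P hK e1 in hb. rewrite hK in hb.
  exact: (ar1 b1p hP (hb (ar2 b1 hP))).
- lia.
Qed.

Lemma ar4 b1 q : b1.+2 * (b1 * q + 1) - 2 = b1 * (b1.+2 * q + 1).
Proof. nia. Qed.

Lemma ar5 b1 X : 0 < X -> b1 * (b1.+1 * X) + b1 * X = 2 * b1 + b1 * (b1.+2 * X - 2).
Proof. move=> hX. have : 2 <= b1.+2 * X by nia. nia. Qed.

Theorem mainTheorem8 (b n : nat) (hb : 2 <= b) :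
  exists m : nat,
    is_w (inT b n) (sgen b n 0) (sgen b n 0 - (b - 1)) m /\
    is_max (inAp (inT b n) (sgen b n 0)) m.
Proof.
case: b hb => [|b1] // hb. have b1p : 0 < b1 by [].
have [q hq] := expn_mod n (ltn0Sn b1). rewrite subn1 /= in hq.
have hA : b1.+2 * b1.+1 ^ n = (b1.+2 * b1.+1 ^ n - 2).+2.
  have : 1 <= b1.+1 ^ n by rewrite expn_gt0.
  have : b1.+2 * 1 <= b1.+2 * b1.+1 ^ n by rewrite leq_mul2l expn_gt0 orbT.
  lia.
have hav : b1.+2 * b1.+1 ^ n - 2 = b1 * (b1.+2 * q + 1) by rewrite hq ar4.
case: n hq hA hav => [|n] hq hA hav.
- apply: (core (K0 := b1) (l0 := nseq b1 1) b1p hA hav).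
  + rewrite Sx_nseq expn1 expn0 muln1. have -> : b1.+2 - 2 = b1 by lia. nia.
  + by rewrite size_nseq.
  + lia.
  + move=> l. have -> : b1.+2 * b1.+1 ^ 0 - 2 = b1 by rewrite expn0; lia.
    exact: low0.
- apply: (core (K0 := 2 * b1) (l0 := nseq b1 n.+2 ++ nseq b1 n.+1) b1p hA hav).
  + rewrite Sx_cat !Sx_nseq (expnS _ n.+1). apply: ar5. by rewrite expn_gt0.
  + by rewrite size_cat !size_nseq; lia.
  + lia.
  + move=> l. exact: low1.
Qed.
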